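(* Let $X$ be a real Hilbert space with norm $\|\cdot\|_2$, identified with its dual, let $f\colon X\to\mathbb{R}$ be differentiable, let $L>0$, $N\ge1$, and take $\phi=\psi=\tfrac12\|\cdot\|_2^2$ (so $\nabla\phi^*=\nabla\psi^*=\mathrm{id}$). Let real coefficients $\{a_{k,i}\}_{0\le i<k\le N}$, $\{b_{k,i}\}_{0\le i\le k\le N}$ be given with $b_{0,0}=-1$ and \[ \sum_{j=0}^{k+1}b_{k+1,j}=0\qquad(k=0,\dots,N-1). \] Consider the CFOM: $y_0\in X$, $x_0=y_0$, $y_{k+1}=y_k-\sum_{i=0}^{k}a_{k+1,i}\nabla f(x_i)$, $x_{k+1}=x_k-\sum_{i=0}^{k+1}b_{k+1,i}y_i$; and its mirror dual: $q_0\in X$, $r_0=-b_{N,N}\nabla f(q_0)$, $q_{k+1}=q_k-\sum_{i=0}^{k}a_{N-i,N-1-k}r_i$, $r_{k+1}=r_k-\sum_{i=0}^{k+1}b_{N-i,N-1-k}\nabla f(q_i)$ ($k=0,\dots,N-1$). Then there exist real numbers $\{h_{k+1,i}\}_{0\le i\le k\le N-1}$, depending only on the coefficients $a,b$ and $L$, such that for every such $f$ and every starting point, the CFOM iterates satisfy \[ x_{k+1}=x_k-\frac1L\sum_{i=0}^{k}h_{k+1,i}\nabla f(x_i),\qquad k=0,\dots,N-1, \] and the mirror dual iterates satisfy \[ q_{k+1}=q_k-\frac1L\sum_{i=0}^{k}h_{N-i,N-1-k}\nabla f(q_i),\qquad k=0,\dots,N-1. \] That is, the two methods reduce to fixed-step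 first-order methods that are H-duals of each other.
   Context: A fixed-step first-order method (FSFOM) $x_{k+1}=x_k-\frac1L\sum_{i=0}^k h_{k+1,i}\nabla f(x_i)$ is identified with the lower-triangular $N\times N$ matrix $H$ with $H_{k+1,i+1}=h_{k+1,i}$ ($0\le i\le k\le N-1$), zero otherwise; its H-dual is the FSFOM given by the anti-diagonal transpose $H^A_{i,j}=H_{N-j+1,N-i+1}$, which is exactly the second recursion in the claim. *)

(* Defs.v *)
From HB Require Import structures.
From mathcomp Require Import all_boot all_order all_algebra.
From mathcomp Require Import all_classical all_reals all_analysis.
Set Implicit Arguments. Unset Strict Implicit. Unset Printing Implicit Defensive.
Import Order.TTheory GRing.Theory Num.Theory.
Import numFieldNormedType.Exports.
Local Open Scope ring_scope.

Definition hilbert_inner (R : realType) (X : normedModType R)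
  (dot : X -> X -> R) : Prop :=
  (forall x y : X, dot x y = dot y x) /\
  (forall (c : R) (x y z : X), dot (c *: x + y) z = c * dot x z + dot y z) /\
  (forall x : X, `|x| = Num.sqrt (dot x x)).

Definition is_gradient (R : realType) (X : normedModType R)
  (dot : X -> X -> R) (f : X -> R) (g : X -> X) : Prop :=
  forall x : X, differentiable f x /\ (forall v : X, 'd f x v = dot (g x) v).

(* Main.v *)
Require Import Defs.
From HB Require Import structures.
From mathcomp Require Import all_boot all_order all_algebra.
From mathcomp Require Import all_classical all_reals all_analysis.
From mathcomp Require Import zify.
Import Order.TTheory GRing.Theory Num.Theory.
Import numFieldNormedType.Exports.
Local Open Scope ring_scope.

Lemma sum_widen0 (V : zmodType) n m (F : nat -> V) : (n <= m)%N ->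
  (forall j, (n <= j < m)%N -> F j = 0) -> \sum_(j < m) F j = \sum_(j < n) F j.
Proof.
move=> nm F0; rewrite [RHS](big_ord_widen m F nm) [RHS]big_mkcond /=.
apply: eq_bigr => j _; case: ifP => // /negbT; rewrite -leqNgt => Hj.
by rewrite F0 // Hj ltn_ord.
Qed.

Lemma sum_widen_if (V : zmodType) n m (F : nat -> V) : (n <= m)%N ->
  \sum_(j < n) F j = \sum_(j < m) (if (j < n)%N then F j else 0).
Proof. by move=> nm; rewrite (big_ord_widen m F nm) big_mkcond. Qed.

Lemma natsum_ord (V : zmodType) (F : nat -> V) l p M : (p <= M)%N ->
  \sum_(l <= m < p) F m = \sum_(m < M) (if ((l <= m) && (m < p))%N then F m else 0).
Proof.
move=> pM; rewrite big_geq_mkord (big_ord_widen_cond _ _ _ pM) big_mkcond /=.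
by apply: eq_bigr => i _; rewrite andbC.
Qed.

Lemma sum_rev (V : zmodType) N (F : nat -> V) :
  \sum_(i < N) F i = \sum_(m < N) F (N - m.+1)%N.
Proof.
rewrite -(big_mkord xpredT F) -(big_mkord xpredT (fun m => F (N - m.+1)%N)).
by rewrite big_nat_rev.
Qed.

Definition cc (R : pzRingType) (a : nat -> nat -> R) (i l : nat) : R :=
  \sum_(l <= m < i) a m.+1 l.
Arguments cc {R}.
Definition CC (R : pzRingType) (b : nat -> nat -> R) (N i j : nat) : R :=
  \sum_(N - i <= p < (N - j).+1) b (N - j)%N p.
Arguments CC {R}.
Definition hh (R : pzRingType) (a b : nat -> nat -> R) (L : R) (k l : nat) : R :=
  - L * \sum_(i < k.+1) b k i * cc a i l.

Arguments hh {R}.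

Lemma cc0 (R : pzRingType) (a : nat -> nat -> R) i l : (i <= l)%N -> cc a i l = 0.
Proof. by move=> H; rewrite /cc big_geq. Qed.

Lemma cc_step (R : pzRingType) (a : nat -> nat -> R) i l :
  cc a i.+1 l = cc a i l + (if (l < i.+1)%N then a i.+1 l else 0).
Proof.
rewrite /cc; case: ifP => H; first by rewrite big_nat_recr.
by rewrite !big_geq ?addr0 //; lia.
Qed.

Lemma CC_step (R : pzRingType) (b : nat -> nat -> R) N i j : (i < N)%N -> (j < N.+1)%N ->
  CC b N i.+1 j = CC b N i j + (if (j < i.+2)%N then b (N - j)%N (N - 1 - i)%N else 0).
Proof.
move=> Hi Hj; rewrite /CC; case: ifP => H.
  have -> : (N - i.+1 = N - 1 - i)%N by lia.
  rewrite big_ltn; last by lia.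
  have -> : ((N - 1 - i).+1 = N - i)%N by lia.
  by rewrite addrC.
by rewrite !big_geq ?addr0 //; lia.
Qed.

Lemma yform (R : pzRingType) (V : lmodType R) (a : nat -> nat -> R) N (gx y : nat -> V) :
  (forall k, (k < N)%N -> y k.+1 = y k - \sum_(i < k.+1) a k.+1 i *: gx i) ->
  forall i, (i <= N)%N -> y i = y 0%N - \sum_(l < N.+1) cc a i l *: gx l.
Proof.
move=> Hy; elim=> [|i IH] Hi.
  by rewrite big1 ?subr0 // => l _; rewrite cc0 ?scale0r.
rewrite Hy // IH ?(ltnW Hi) //.
rewrite (@sum_widen_if _ _ _ (fun l => a i.+1 l *: gx l) (_ : (i.+1 <= N.+1)%N)); last by lia.
rewrite -addrA -opprD -big_split /=; congr (_ - _).
apply: eq_bigr => l _; rewrite cc_step scalerDl; case: ifP => _ //.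
by rewrite scale0r.
Qed.

Lemma rform (R : pzRingType) (V : lmodType R) (b : nat -> nat -> R) N (gq r : nat -> V) :
  (0 < N)%N ->
  r 0%N = - (b N N *: gq 0%N) ->
  (forall k, (k < N)%N ->
     r k.+1 = r k - \sum_(i < k.+2) b (N - i)%N (N - 1 - k)%N *: gq i) ->
  forall i, (i <= N)%N -> r i = - \sum_(j < N.+1) CC b N i j *: gq j.
Proof.
move=> N0 Hr0 Hr; elim=> [|i IH] Hi.
  rewrite Hr0 (@sum_widen0 _ 1 N.+1 (fun j => CC b N 0 j *: gq j)) // ?big_ord1 /CC ?subn0 ?big_nat1 //.
  move=> j /andP[j1 jN]; rewrite /CC big_geq ?scale0r //; lia.
rewrite Hr // IH ?(ltnW Hi) //.
rewrite (@sum_widen_if _ _ _ (fun j => b (N - j)%N (N - 1 - i)%N *: gq j) (_ : (i.+2 <= N.+1)%N)); last by lia.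
rewrite -opprD -big_split /=; congr (- _).
apply: eq_bigr => j _; rewrite CC_step ?ltn_ord //.
rewrite scalerDl; case: ifP => _ //.
by rewrite scale0r.
Qed.

Lemma ident (R : comPzRingType) (a b : nat -> nat -> R) N k j : (k < N)%N ->
  \sum_(i < k.+1) a (N - i)%N (N - 1 - k)%N * CC b N i j
  = \sum_(i < (N - j).+1) b (N - j)%N i * cc a i (N - 1 - k)%N.
Proof.
move=> Hk; set l := (N - 1 - k)%N.
transitivity (\sum_(m < N) \sum_(p < N.+1)
   (if ((l <= m) && (m < p) && (p <= N - j))%N then a m.+1 l * b (N - j)%N p else 0)).
  rewrite (@sum_widen_if _ _ _ (fun i => a (N - i)%N l * CC b N i j) (_ : (k.+1 <= N)%N)) //.
  rewrite (@sum_rev _ _ (fun i => if (i < k.+1)%N then a (N - i)%N l * CC b N i j else 0)).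
  apply: eq_bigr => m _.
  have mN := ltn_ord m.
  rewrite /CC (@natsum_ord _ _ _ _ _ (_ : ((N - j).+1 <= N.+1)%N)); last by lia.
  have -> : (N - (N - m.+1) = m.+1)%N by lia.
  case: ifP => Hm.
    rewrite mulr_sumr; apply: eq_bigr => p _.
    case: ifP => H1; case: ifP => H2; rewrite ?mulr0 //; exfalso; lia.
  by rewrite big1 // => p _; case: ifP => // H; exfalso; lia.
rewrite (@sum_widen_if _ _ _ (fun i => b (N - j)%N i * cc a i l) (_ : ((N - j).+1 <= N.+1)%N)); last by lia.
rewrite exchange_big /=; apply: eq_bigr => p _.
have pN := ltn_ord p.
case: ifP => Hp.
  rewrite /cc (@natsum_ord _ _ l p N (_ : (p <= N)%N)); last by lia.
  rewrite mulr_sumr; apply: eq_bigr => m _.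
  case: ifP => H1; case: ifP => H2; rewrite ?mulr0 //; try (exfalso; lia).
  by rewrite mulrC.
by rewrite big1 // => m _; case: ifP => // H; exfalso; lia.
Qed.

Theorem proposition5p1 (R : realType) (a b : nat -> nat -> R) (L : R) (N : nat) :
  0 < L -> (1 <= N)%N ->
  b 0%N 0%N = -1 ->
  (forall k : nat, (k < N)%N -> \sum_(j < k.+2) b k.+1 j = 0) ->
  exists h : nat -> nat -> R,
    forall (X : completeNormedModType R) (dot : X -> X -> R),
      hilbert_inner dot ->
      forall (f : X -> R) (g : X -> X), is_gradient dot f g ->
      (* CFOM iterates *)
      (forall x y : nat -> X,
        x 0%N = y 0%N ->
        (forall k : nat, (k < N)%N ->
           y k.+1 = y k - \sum_(i < k.+1) a k.+1 i *: g (x i)) ->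
        (forall k : nat, (k < N)%N ->
           x k.+1 = x k - \sum_(i < k.+2) b k.+1 i *: y i) ->
        forall k : nat, (k < N)%N ->
           x k.+1 = x k - L^-1 *: \sum_(i < k.+1) h k.+1 i *: g (x i)) /\
      (* mirror-dual iterates *)
      (forall q r : nat -> X,
        r 0%N = - (b N N *: g (q 0%N)) ->
        (forall k : nat, (k < N)%N ->
           q k.+1 = q k - \sum_(i < k.+1) a (N - i)%N (N - 1 - k)%N *: r i) ->
        (forall k : nat, (k < N)%N ->
           r k.+1 = r k - \sum_(i < k.+2) b (N - i)%N (N - 1 - k)%N *: g (q i)) ->
        forall k : nat, (k < N)%N ->
           q k.+1 = q k - L^-1 *: \sum_(i < k.+1) h (N - i)%N (N - 1 - k)%N *: g (q i)).
Proof.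
move=> HL HN Hb00 Hb.
have L0 : L != 0 by rewrite gt_eqF.
have coef : forall S : R, L^-1 * (- L * S) = - S.
  by move=> S; rewrite mulNr mulrN mulrA mulVf ?mul1r.
exists (hh a b L) => X dot _ f g _; split.
  move=> x y _ Hy Hx k Hk.
  have Y := @yform _ _ a N (fun l => g (x l)) y Hy.
  rewrite Hx //; congr (_ - _).
  transitivity (- \sum_(l < N.+1) (\sum_(i < k.+2) b k.+1 i * cc a i l) *: g (x l)).
    rewrite (eq_bigr (fun i : 'I_k.+2 =>
       b k.+1 i *: (y 0%N - \sum_(l < N.+1) cc a i l *: g (x l)))); last first.
      by move=> i _; rewrite -Y //; have := ltn_ord i; lia.
    under eq_bigr do rewrite scalerBr.
    rewrite big_split /= -scaler_suml Hb // scale0r add0r sumrN; congr (- _).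
    transitivity (\sum_(i < k.+2) \sum_(l < N.+1) (b k.+1 i * cc a i l) *: g (x l)).
      apply: eq_bigr => i _; rewrite scaler_sumr; apply: eq_bigr => l _.
      by rewrite scalerA.
    rewrite exchange_big /=; apply: eq_bigr => l _.
    by rewrite scaler_suml.
  rewrite scaler_sumr -sumrN.
  rewrite (@sum_widen0 _ k.+1 N.+1
     (fun l => - ((\sum_(i < k.+2) b k.+1 i * cc a i l) *: g (x l)))); last 2 first.
  - by lia.
  - move=> l /andP[H1 H2]; rewrite big1 ?scale0r ?oppr0 // => i _.
    by rewrite cc0 ?mulr0 //; have := ltn_ord i; lia.
  apply: eq_bigr => l _.
  by rewrite scalerA /hh coef scaleNr.
move=> q r Hr0 Hq Hr k Hk.
have Rf := @rform _ _ b N (fun j => g (q j)) r HN Hr0 Hr.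
rewrite Hq //; congr (_ - _).
transitivity (- \sum_(j < N.+1)
   (\sum_(i < k.+1) a (N - i)%N (N - 1 - k)%N * CC b N i j) *: g (q j)).
  rewrite (eq_bigr (fun i : 'I_k.+1 =>
     a (N - i)%N (N - 1 - k)%N *: (- \sum_(j < N.+1) CC b N i j *: g (q j)))); last first.
    by move=> i _; rewrite -Rf //; have := ltn_ord i; lia.
  under eq_bigr do rewrite scalerN.
  rewrite sumrN; congr (- _).
  transitivity (\sum_(i < k.+1) \sum_(j < N.+1) (a (N - i)%N (N - 1 - k)%N * CC b N i j) *: g (q j)).
    apply: eq_bigr => i _; rewrite scaler_sumr; apply: eq_bigr => j _.
    by rewrite scalerA.
  rewrite exchange_big /=; apply: eq_bigr => j _.
  by rewrite scaler_suml.
rewrite scaler_sumr -sumrN.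
rewrite (@sum_widen0 _ k.+1 N.+1
   (fun j => - ((\sum_(i < k.+1) a (N - i)%N (N - 1 - k)%N * CC b N i j) *: g (q j)))); last 2 first.
- by lia.
- move=> j /andP[H1 H2]; rewrite big1 ?scale0r ?oppr0 // => i _.
  by rewrite /CC big_geq ?mulr0 //; have := ltn_ord i; lia.
apply: eq_bigr => j _.
by rewrite scalerA /hh coef scaleNr ident.
Qed.
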